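(* If $C \subseteq \mathbb{Z}$ is a nonempty finite set, then there exists a set $W \subseteq \mathbb{Z}$ such that $C$ is a minimal additive complement to $W$.
   Context: For $X, Y \subseteq \mathbb{Z}$, $X + Y = \{x + y : x \in X, y \in Y\}$. A set $C \subseteq \mathbb{Z}$ is an additive complement to $W \subseteq \mathbb{Z}$ if $C + W = \mathbb{Z}$; it is a minimal additive complement to $W$ if moreover no proper subset of $C$ is an additive complement to $W$. *)

(* Defs.v *)
From Stdlib Require Import ZArith List.
Open Scope Z_scope.

Definition sumset (X Y : Z -> Prop) : Z -> Prop :=
  fun z => exists x y, X x /\ Y y /\ z = x + y.

Definition additive_complement (C W : Z -> Prop) : Prop :=
  forall z : Z, sumset C W z.

Definition proper_subset (C' C : Z -> Prop) : Prop :=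
  (forall x, C' x -> C x) /\ (exists x, C x /\ ~ C' x).

Definition minimal_additive_complement (C W : Z -> Prop) : Prop :=
  additive_complement C W /\
  forall C' : Z -> Prop, proper_subset C' C -> ~ additive_complement C' W.

Definition finite_set (C : Z -> Prop) : Prop :=
  exists l : list Z, forall x, C x <-> In x l.

(* Main.v *)
Require Import Defs.
From Stdlib Require Import ZArith List Lia Classical.
Open Scope Z_scope.

Lemma list_min (l : list Z) (x0 : Z) : In x0 l ->
  exists m, In m l /\ forall x, In x l -> m <= x.
Proof.
  clear; revert x0; induction l as [|a l IH]; simpl; [tauto|]. intro x0.
  intros _. destruct l as [|b l'].
  - exists a. simpl. split; [auto|]. intros x [H|[]]; lia.
  - destruct (IH b (or_introl eq_refl)) as [m [Hm Hm2]].
    destruct (Z_le_gt_dec a m).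
    + exists a. split; [auto|]. intros x [H|H]; [lia|]. specialize (Hm2 x H); lia.
    + exists m. split; [auto|]. intros x [H|H]; [lia|]. auto.
Qed.

Lemma list_max (l : list Z) (x0 : Z) : In x0 l ->
  exists m, In m l /\ forall x, In x l -> x <= m.
Proof.
  clear; revert x0; induction l as [|a l IH]; simpl; [tauto|]. intro x0.
  intros _. destruct l as [|b l'].
  - exists a. simpl. split; [auto|]. intros x [H|[]]; lia.
  - destruct (IH b (or_introl eq_refl)) as [m [Hm Hm2]].
    destruct (Z_le_gt_dec m a).
    + exists a. split; [auto|]. intros x [H|H]; [lia|]. specialize (Hm2 x H); lia.
    + exists m. split; [auto|]. intros x [H|H]; [lia|]. auto.
Qed.

Lemma mul_small (x M r : Z) : 0 < M -> x * M = r -> -M < r < M -> x = 0.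
Proof.
  intros HM H Hr. destruct (Z_lt_le_dec 0 x).
  - assert (x * M >= 1 * M) by (apply Z.le_ge, Z.mul_le_mono_nonneg_r; lia). lia.
  - destruct (Z_lt_le_dec x 0); [|lia].
    assert (x * M <= -1 * M) by (apply Z.mul_le_mono_nonneg_r; lia). lia.
Qed.

Theorem theorem9 (C : Z -> Prop) (hfin : finite_set C) (hne : exists c, C c) :
  exists W : Z -> Prop, minimal_additive_complement C W.
Proof.
  destruct hfin as [l Hl]. destruct hne as [c0 Hc0].
  destruct (list_min l c0 (proj1 (Hl c0) Hc0)) as [lo [Hlo Hlo2]].
  destruct (list_max l c0 (proj1 (Hl c0) Hc0)) as [hi [Hhi Hhi2]].
  assert (Blo : forall x, C x -> lo <= x) by (intros x Hx; apply Hlo2, Hl, Hx).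
  assert (Bhi : forall x, C x -> x <= hi) by (intros x Hx; apply Hhi2, Hl, Hx).
  apply Hl in Hlo. apply Hl in Hhi.
  set (M := 2 * (hi - lo) + 1).
  assert (HM : 0 < M) by (pose proof (Blo _ Hhi); unfold M; lia).
  set (S := fun w => exists a b, C a /\ C b /\ a <> b /\ w = a * M - b).
  exists (fun w => ~ S w). split.
  - intro z. apply NNPP. intro Hn.
    assert (K : forall c, C c -> S (z - c)).
    { intros c Hc. apply NNPP. intro HS. apply Hn. exists c, (z - c). repeat split; auto; lia. }
    destruct (K lo Hlo) as [a1 [b1 [Ha1 [Hb1 [Hab1 E1]]]]].
    destruct (K hi Hhi) as [a2 [b2 [Ha2 [Hb2 [Hab2 E2]]]]].
    destruct (K a1 Ha1) as [a3 [b3 [Ha3 [Hb3 [Hab3 E3]]]]].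
    pose proof (Blo _ Hb1); pose proof (Bhi _ Hb1);
    pose proof (Blo _ Hb2); pose proof (Bhi _ Hb2);
    pose proof (Blo _ Hb3); pose proof (Bhi _ Hb3);
    pose proof (Blo _ Ha1); pose proof (Bhi _ Ha1).
    assert (a1 - a2 = 0).
    { apply (mul_small _ M (hi - lo + b1 - b2)); [auto| |unfold M; lia].
      rewrite Z.mul_sub_distr_r. lia. }
    assert (a1 - a3 = 0).
    { apply (mul_small _ M (a1 - lo + b1 - b3)); [auto| |unfold M; lia].
      rewrite Z.mul_sub_distr_r. lia. }
    assert (a2 = a1) by lia. assert (a3 = a1) by lia. subst a2 a3.
    lia.
  - intros C' [Hsub [c [Hc Hnc]]] Hcomp.
    destruct (Hcomp (c * M)) as [c' [w [Hc' [Hw E]]]].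
    apply Hw. exists c, c'. repeat split; auto.
    + intro; subst; auto.
    + lia.
Qed.
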